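(* Let $(\mathscr C,A,\psi)$ be an entwining structure. For $\sigma\in V_1$ define $\alpha(\sigma)=\tau$ by $\tau(\mathcal M)(X):\mathcal M(X)\otimes A\to\mathcal M(X)$, $m\otimes a\mapsto m_{X0}\,\sigma_X(m_{X1}\otimes a)$, for $\mathcal M\in Com^{\mathscr C}$ and $X\in Ob(\mathscr C)$. Then $\alpha$ is a linear isomorphism from $V_1$ onto the space $Nat(G_\psi F_\psi,\mathrm{id}_{Com^{\mathscr C}})$ of natural transformations, whose inverse sends $\tau$ to the family $\sigma_X=\epsilon_X\circ\tau(\mathcal H_X)(X):\mathscr C(X,X)\otimes A\to K$. In particular $V_1\cong Nat(G_\psi F_\psi,\mathrm{id}_{Com^{\mathscr C}})$.
   Context: $K$ is a field. A $K$-coalgebra with several objects $\mathscr C$: a set $Ob(\mathscr C)$, vector spaces $\mathscr C(X,Y)$, linear comultiplications $\delta_{XYZ}:\mathscr C(X,Z)\to\mathscr C(Y,Z)\otimes\mathscr C(X,Y)$, $\delta_{XYZ}(f)=f_{Y1}\otimes f_{Y2}$, and counits $\epsilon_X:\mathscr C(X,X)\to K$, with $(\delta_{YWZ}\otimes\mathrm{id})\delta_{XYZ}=(\mathrm{id}\otimes\delta_{XYW})\delta_{XWZ}$ and $(\epsilon_Y\otimes\mathrm{id})\delta_{XYY}=\mathrm{id}=(\mathrm{id}\otimes\epsilon_X)\delta_{XXY}$. For a $K$-algebra $A$ (multiplication $\mu_A$), an entwining structure $(\mathscr C,A,\psi)$ is a family of linear maps $\psi_{XY}:\mathscr C(X,Y)\otimes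 A\to A\otimes\mathscr C(X,Y)$, $\psi_{XY}(f\otimes a)=a_\psi\otimes f^\psi$, with (i) $(\mathrm{id}_A\otimes\delta_{XYZ})\psi_{XZ}=(\psi_{YZ}\otimes\mathrm{id})(\mathrm{id}\otimes\psi_{XY})(\delta_{XYZ}\otimes\mathrm{id}_A)$; (ii) $\psi_{XZ}(\mathrm{id}\otimes\mu_A)=(\mu_A\otimes\mathrm{id})(\mathrm{id}_A\otimes\psi_{XZ})(\psi_{XZ}\otimes\mathrm{id}_A)$; (iii) $\psi_{XZ}(f\otimes1)=1\otimes f$; (iv) $\epsilon_Z(g^\psi)a_\psi=\epsilon_Z(g)a$. $Com^{\mathscr C}$: right $\mathscr C$-comodules $\mathcal M$ (spaces $\mathcal M(X)$, coactions $\rho_{XY}(m)=m_{Y0}\otimes m_{Y1}\in\mathcal M(Y)\otimes\mathscr C(X,Y)$ with $(\rho_{ZY}\otimes\mathrm{id})\rho_{XZ}=(\mathrm{id}\otimes\delta_{XZY})\rho_{XY}$, $(\mathrm{id}\otimes\epsilon_X)\rho_{XX}=\mathrm{id}$) and coaction-compatible families of linear maps. $Com^{\mathscr C}_A(\psi)$: entwined comodules, i.e. comodules with right $A$-module structures on each $\mathcal M(X)$ such that $\rho_{XY}(ma)=m_{Y0}a_\psi\otimes(m_{Y1})^\psi$, with $A$-linear comodule morphisms. $F_\psi(\mathcal M)=\mathcal M\otimes A$ with $(\mathcal M\otimes A)(X)=\mathcal M(X)\otimes A$, $(m\otimes a)b=m\otimes ab$, coaction $m\otimes a\mapsto m_{Y0}\otimes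 a_\psi\otimes(m_{Y1})^\psi$; $G_\psi$ is the forgetful functor. $\mathcal H_X$ is the comodule with $\mathcal H_X(Y)=\mathscr C(Y,X)$ and coactions $\delta_{YZX}$. $V_1$ is the vector space of families $\sigma=\{\sigma_X:\mathscr C(X,X)\otimes A\to K\}_{X\in Ob(\mathscr C)}$ of linear maps such that $\sigma_Y(f_{Y1}\otimes a_\psi)f_{Y2}^\psi=\sigma_X(f_{X2}\otimes a)f_{X1}$ in $\mathscr C(X,Y)$ for all $f\in\mathscr C(X,Y)$, $a\in A$, $X,Y\in Ob(\mathscr C)$, where $a_\psi\otimes f_{Y2}^\psi=\psi_{XY}(f_{Y2}\otimes a)$. *)

(* Defs.v *)
(* Tensor products are not available in MathComp for
   arbitrary (possibly infinite-dimensional) K-vector spaces, so an element of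
   U (x) V is represented by a finite list of pure tensors (a finite sum
   sum_i u_i (x) v_i), and two such lists are equal *as tensors* iff every
   bilinear map out of U x V (into any K-vector space) takes the same value on
   them (universal property of the tensor product).  Linear maps out of a
   tensor product U (x) V are represented by bilinear maps U -> V -> W. *)
From HB Require Import structures.
From mathcomp Require Import all_boot all_algebra.
Unset Printing Implicit Defensive.
Import GRing.Theory.
Local Open Scope ring_scope.

Section MultiCoalgebra.
Variable K : fieldType.

Definition bilinear_map {U V W : lmodType K} (phi : U -> V -> W) : Prop :=
  (forall (k : K) u u' v, phi (k *: u + u') v = k *: phi u v + phi u' v) /\
  (forall (k : K) u v v', phi u (k *: v + v') = k *: phi u v + phi u v').

Definition bilinear_form {U V : lmodType K} (phi : U -> V -> K) : Prop :=
  (forall (k : K) u u' v, phi (k *: u + u') v = k * phi u v + phi u' v) /\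
  (forall (k : K) u v v', phi u (k *: v + v') = k * phi u v + phi u v').

Definition trilinear_map {U V T W : lmodType K} (phi : U -> V -> T -> W) : Prop :=
  (forall (k : K) u u' v t, phi (k *: u + u') v t = k *: phi u v t + phi u' v t) /\
  (forall (k : K) u v v' t, phi u (k *: v + v') t = k *: phi u v t + phi u v' t) /\
  (forall (k : K) u v t t', phi u v (k *: t + t') = k *: phi u v t + phi u v t').

Definition teq2 {U V : lmodType K} (s t : seq (U * V)) : Prop :=
  forall (W : lmodType K) (phi : U -> V -> W), bilinear_map phi ->
    \sum_(p <- s) phi p.1 p.2 = \sum_(p <- t) phi p.1 p.2.

Definition teq3 {U V T : lmodType K} (s t : seq (U * V * T)) : Prop :=
  forall (W : lmodType K) (phi : U -> V -> T -> W), trilinear_map phi ->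
    \sum_(p <- s) phi p.1.1 p.1.2 p.2 = \sum_(p <- t) phi p.1.1 p.1.2 p.2.

Definition tscale {U : lmodType K} {V : Type} (k : K) (s : seq (U * V)) :
  seq (U * V) := [seq (k *: p.1, p.2) | p <- s].

Record mcoalgebra := MCoalgebra {
  ob : Type;
  mhom : ob -> ob -> lmodType K;
  (* delta X Y Z f = f_{Y1} (x) f_{Y2} in C(Y,Z) (x) C(X,Y) *)
  delta : forall X Y Z : ob, mhom X Z -> seq (mhom Y Z * mhom X Y);
  eps : forall X : ob, mhom X X -> K;
  delta_lin : forall (X Y Z : ob) (k : K) (f g : mhom X Z),
    teq2 (delta X Y Z (k *: f + g)) (tscale k (delta X Y Z f) ++ delta X Y Z g);
  eps_lin : forall (X : ob) (k : K) (f g : mhom X X),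
    eps X (k *: f + g) = k * eps X f + eps X g;
  coassoc : forall (X Y W Z : ob) (f : mhom X Z),
    teq3 (flatten [seq [seq (q.1, q.2, p.2) | q <- delta Y W Z p.1]
                  | p <- delta X Y Z f])
         (flatten [seq [seq (p.1, q.1, q.2) | q <- delta X Y W p.2]
                  | p <- delta X W Z f]);
  counitL : forall (X Y : ob) (f : mhom X Y),
    \sum_(p <- delta X Y Y f) eps Y p.1 *: p.2 = f;
  counitR : forall (X Y : ob) (f : mhom X Y),
    \sum_(p <- delta X X Y f) eps X p.2 *: p.1 = f
}.

(* Entwining structure (C, A, psi); psi X Y f a = a_psi (x) f^psi *)
Record entwining (C : mcoalgebra) (A : algType K) := Entwining {
  psi : forall X Y : ob C, mhom C X Y -> A -> seq (A * mhom C X Y);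
  psi_linl : forall (X Y : ob C) (k : K) (f g : mhom C X Y) (a : A),
    teq2 (psi X Y (k *: f + g) a) (tscale k (psi X Y f a) ++ psi X Y g a);
  psi_linr : forall (X Y : ob C) (f : mhom C X Y) (k : K) (a b : A),
    teq2 (psi X Y f (k *: a + b)) (tscale k (psi X Y f a) ++ psi X Y f b);
  ent_delta : forall (X Y Z : ob C) (f : mhom C X Z) (a : A),
    teq3 (flatten [seq [seq (p.1, q.1, q.2) | q <- delta C X Y Z p.2]
                  | p <- psi X Z f a])
         (flatten [seq flatten [seq [seq (r.1, r.2, q.2) | r <- psi Y Z p.1 q.1]
                               | q <- psi X Y p.2 a]
                  | p <- delta C X Y Z f]);
  ent_mul : forall (X Z : ob C) (f : mhom C X Z) (a b : A),
    teq2 (psi X Z f (a * b))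
         (flatten [seq [seq (p.1 * q.1, q.2) | q <- psi X Z p.2 b]
                  | p <- psi X Z f a]);
  ent_one : forall (X Z : ob C) (f : mhom C X Z), teq2 (psi X Z f 1) [:: (1, f)];
  ent_eps : forall (Z : ob C) (g : mhom C Z Z) (a : A),
    \sum_(p <- psi Z Z g a) eps C Z p.2 *: p.1 = eps C Z g *: a
}.
Arguments psi {C A}.

(* right C-comodules; rho X Y m = m_{Y0} (x) m_{Y1} in M(Y) (x) C(X,Y) *)
Record comodule (C : mcoalgebra) := Comodule {
  cm : ob C -> lmodType K;
  rho : forall X Y : ob C, cm X -> seq (cm Y * mhom C X Y);
  rho_lin : forall (X Y : ob C) (k : K) (m n : cm X),
    teq2 (rho X Y (k *: m + n)) (tscale k (rho X Y m) ++ rho X Y n);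
  rho_coassoc : forall (X Z Y : ob C) (m : cm X),
    teq3 (flatten [seq [seq (q.1, q.2, p.2) | q <- rho Z Y p.1]
                  | p <- rho X Z m])
         (flatten [seq [seq (p.1, q.1, q.2) | q <- delta C X Z Y p.2]
                  | p <- rho X Y m]);
  rho_counit : forall (X : ob C) (m : cm X),
    \sum_(p <- rho X X m) eps C X p.2 *: p.1 = m
}.
Arguments cm {C}.
Arguments rho {C}.

Definition comodule_morphism {C : mcoalgebra} {M N : comodule C}
    (g : forall X : ob C, cm M X -> cm N X) : Prop :=
  (forall (X : ob C) (k : K) (m m' : cm M X), g X (k *: m + m') = k *: g X m + g X m') /\
  (forall (X Y : ob C) (m : cm M X),
     teq2 (rho N X Y (g X m)) [seq (g Y p.1, p.2) | p <- rho M X Y m]).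

Definition Hcomod {C : mcoalgebra} (X : ob C) : comodule C :=
  @Comodule C (fun Y => mhom C Y X) (fun Y Z f => delta C Y Z X f)
    (fun Y Z k f g => delta_lin C Y Z X k f g)
    (fun Y Z W m => coassoc C Y Z W X m)
    (fun Y m => counitR C Y X m).

Section Entw.
Variables (C : mcoalgebra) (A : algType K) (E : entwining C A).

(* A family of linear maps tau(M)(X) : M(X) (x) A -> M(X), given as bilinear maps *)
Definition nat_family := forall (M : comodule C) (X : ob C), cm M X -> A -> cm M X.

Definition is_nat (tau : nat_family) : Prop :=
  (forall (M : comodule C) (X : ob C), bilinear_map (tau M X)) /\
  (* each tau(M) is a morphism of comodules G_psi F_psi (M) = M (x) A -> M *)
  (forall (M : comodule C) (X Y : ob C) (m : cm M X) (a : A),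
     teq2 (rho M X Y (tau M X m a))
          (flatten [seq [seq (tau M Y p.1 q.1, q.2) | q <- psi E X Y p.2 a]
                   | p <- rho M X Y m])) /\
  (forall (M N : comodule C) (g : forall X : ob C, cm M X -> cm N X),
     comodule_morphism g ->
     forall (X : ob C) (m : cm M X) (a : A), tau N X (g X m) a = g X (tau M X m a)).

Definition sigma_family := forall X : ob C, mhom C X X -> A -> K.

Definition in_V1 (sigma : sigma_family) : Prop :=
  (forall X : ob C, bilinear_form (sigma X)) /\
  (forall (X Y : ob C) (f : mhom C X Y) (a : A),
     \sum_(p <- delta C X Y Y f) \sum_(q <- psi E X Y p.2 a) sigma Y p.1 q.1 *: q.2
     = \sum_(p <- delta C X X Y f) sigma X p.2 a *: p.1).

Definition alpha (sigma : sigma_family) : nat_family :=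
  fun M X m a => \sum_(p <- rho M X X m) sigma X p.2 a *: p.1.

Definition beta (tau : nat_family) : sigma_family :=
  fun X f a => eps C X (tau (Hcomod X) X f a).

End Entw.
End MultiCoalgebra.

Arguments ob {K}.
Arguments mhom {K}.
Arguments delta {K}.
Arguments eps {K}.
Arguments entwining {K}.
Arguments psi {K C A}.
Arguments comodule {K}.
Arguments cm {K C}.
Arguments rho {K C}.
Arguments comodule_morphism {K C M N}.
Arguments Hcomod {K C}.
Arguments nat_family {K}.
Arguments is_nat {K C A}.
Arguments sigma_family {K}.
Arguments in_V1 {K C A}.
Arguments alpha {K C A}.
Arguments beta {K C A}.

(* Main.v *)
Require Import Defs.
From HB Require Import structures.
From mathcomp Require Import all_boot all_algebra.
From mathcomp Require Import boolp.
Import GRing.Theory.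
Local Open Scope ring_scope.
Set Implicit Arguments.
Unset Strict Implicit.

Section Lin.
Variable K : fieldType.

Definition linm {U W : lmodType K} (f : U -> W) :=
  forall k x y, f (k *: x + y) = k *: f x + f y.

Lemma linm0 (U W : lmodType K) (f : U -> W) : linm f -> f 0 = 0.
Proof.
move=> H; have := H 1 0 0; rewrite !scale1r addr0 => E.
by apply: (@addrI _ (f 0)); rewrite addr0 -E.
Qed.

Lemma linmD (U W : lmodType K) (f : U -> W) : linm f -> forall x y, f (x + y) = f x + f y.
Proof. by move=> H x y; rewrite -[x in LHS]scale1r H scale1r. Qed.

Lemma linmZ (U W : lmodType K) (f : U -> W) : linm f -> forall k x, f (k *: x) = k *: f x.
Proof. by move=> H k x; rewrite -[_ *: x]addr0 H linm0 // addr0. Qed.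

Lemma linm_sum (U W : lmodType K) (f : U -> W) I (r : seq I) (F : I -> U) :
  linm f -> f (\sum_(i <- r) F i) = \sum_(i <- r) f (F i).
Proof.
move=> H; elim: r => [|x r IH]; first by rewrite !big_nil linm0.
by rewrite !big_cons linmD // IH.
Qed.

Definition linK {U : lmodType K} (f : U -> K) :=
  forall k x y, f (k *: x + y) = k * f x + f y.

Lemma linK0 (U : lmodType K) (f : U -> K) : linK f -> f 0 = 0.
Proof.
move=> H; have := H 1 0 0; rewrite !scale1r addr0 mul1r => E.
by apply: (@addrI _ (f 0)); rewrite addr0 -E.
Qed.

Lemma linKD (U : lmodType K) (f : U -> K) : linK f -> forall x y, f (x + y) = f x + f y.
Proof. by move=> H x y; rewrite -[x in LHS]scale1r H mul1r. Qed.

Lemma linKZ (U : lmodType K) (f : U -> K) : linK f -> forall k x, f (k *: x) = k * f x.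
Proof. by move=> H k x; rewrite -[_ *: x]addr0 H linK0 // addr0. Qed.

Lemma linK_sum (U : lmodType K) (f : U -> K) I (r : seq I) (F : I -> U) :
  linK f -> f (\sum_(i <- r) F i) = \sum_(i <- r) f (F i).
Proof.
move=> H; elim: r => [|x r IH]; first by rewrite !big_nil linK0.
by rewrite !big_cons linKD // IH.
Qed.

Lemma bil_l (U V W : lmodType K) (phi : U -> V -> W) : bilinear_map K phi -> forall v, linm (phi^~ v).
Proof. by case=> H _ v k x y; rewrite H. Qed.
Lemma bil_r (U V W : lmodType K) (phi : U -> V -> W) : bilinear_map K phi -> forall u, linm (phi u).
Proof. by case=> _ H u k x y; rewrite H. Qed.

Lemma sum_tscale (U : lmodType K) (V W : lmodType K) (phi : U -> V -> W) k s :
  bilinear_map K phi ->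
  \sum_(p <- tscale K k s) phi p.1 p.2 = k *: \sum_(p <- s) phi p.1 p.2.
Proof.
move=> H; rewrite big_map scaler_sumr; apply: eq_bigr => p _ /=.
by rewrite (linmZ (bil_l H p.2)).
Qed.

Lemma teq2_refl (U V : lmodType K) (s : seq (U * V)) : teq2 K s s.
Proof. by []. Qed.
Lemma teq2_sym (U V : lmodType K) (s t : seq (U * V)) : teq2 K s t -> teq2 K t s.
Proof. by move=> H W phi Hp; rewrite H. Qed.
Lemma teq2_trans (U V : lmodType K) (s t u : seq (U * V)) : teq2 K s t -> teq2 K t u -> teq2 K s u.
Proof. by move=> H1 H2 W phi Hp; rewrite H1 // H2. Qed.
Lemma teq2_cat (U V : lmodType K) (s s' t t' : seq (U * V)) :
  teq2 K s s' -> teq2 K t t' -> teq2 K (s ++ t) (s' ++ t').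
Proof. by move=> H1 H2 W phi Hp; rewrite !big_cat H1 // H2. Qed.
Lemma teq2_scale (U V : lmodType K) k (s s' : seq (U * V)) :
  teq2 K s s' -> teq2 K (tscale K k s) (tscale K k s').
Proof. by move=> H W phi Hp; rewrite !sum_tscale // H. Qed.

End Lin.

Section Tensor.
Variables (K : fieldType) (U V : lmodType K).

Definition tclass := {P : seq (U * V) -> Prop | exists s, P = teq2 K s}.
Definition tmk (s : seq (U * V)) : tclass := exist _ (teq2 K s) (ex_intro _ s erefl).

Lemma tmk_eq s t : teq2 K s t -> tmk s = tmk t.
Proof.
move=> H; apply: eq_exist; apply: funext => x; apply: propext; split.
  by apply: teq2_trans; apply: teq2_sym.
by apply: teq2_trans.
Qed.

Lemma tmk_inj s t : tmk s = tmk t -> teq2 K s t.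
Proof. by move=> /(congr1 (@proj1_sig _ _)) /= ->. Qed.

Definition trepr (c : tclass) : seq (U * V) := proj1_sig (cid (proj2_sig c)).

Lemma treprK c : tmk (trepr c) = c.
Proof.
case: c => P HP; rewrite /trepr /=; case: (cid HP) => s /= Hs.
by apply: eq_exist.
Qed.

Lemma trepr_mk s : teq2 K (trepr (tmk s)) s.
Proof. by apply: tmk_inj; rewrite treprK. Qed.

Lemma tclassP c : exists s, c = tmk s.
Proof. by exists (trepr c); rewrite treprK. Qed.

Definition tzero := tmk [::].
Definition tadd c d := tmk (trepr c ++ trepr d).
Definition tscl k c := tmk (tscale K k (trepr c)).
Definition topp c := tscl (-1) c.

Lemma taddE s t : tadd (tmk s) (tmk t) = tmk (s ++ t).
Proof. by apply: tmk_eq; apply: teq2_cat; apply: trepr_mk. Qed.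
Lemma tsclE k s : tscl k (tmk s) = tmk (tscale K k s).
Proof. by apply: tmk_eq; apply: teq2_scale; apply: trepr_mk. Qed.

Lemma taddA : associative tadd.
Proof.
move=> a b c; case: (tclassP a) (tclassP b) (tclassP c) => [s ->] [t ->] [u ->].
by rewrite !taddE catA.
Qed.
Lemma taddC : commutative tadd.
Proof.
move=> a b; case: (tclassP a) (tclassP b) => [s ->] [t ->].
rewrite !taddE; apply: tmk_eq => W phi Hp; rewrite !big_cat; exact: addrC.
Qed.
Lemma tadd0 : left_id tzero tadd.
Proof. by move=> a; case: (tclassP a) => [s ->]; rewrite taddE. Qed.
Lemma taddN : left_inverse tzero topp tadd.
Proof.
move=> a; case: (tclassP a) => [s ->]; rewrite /topp tsclE taddE.
apply: tmk_eq => W phi Hp; rewrite big_cat sum_tscale // big_nil.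
rewrite scaleN1r; exact: addNr.
Qed.

HB.instance Definition _ := gen_eqMixin tclass.
HB.instance Definition _ := gen_choiceMixin tclass.
HB.instance Definition _ := GRing.isZmodule.Build tclass taddA taddC tadd0 taddN.

Lemma taddE' s t : (tmk s + tmk t : tclass) = tmk (s ++ t).
Proof. exact: taddE. Qed.

Lemma tsclA a b v : tscl a (tscl b v) = tscl (a * b) v.
Proof.
case: (tclassP v) => [s ->]; rewrite !tsclE; apply: tmk_eq => W phi Hp.
by rewrite !sum_tscale // scalerA.
Qed.
Lemma tscl1 : left_id 1 tscl.
Proof.
move=> v; case: (tclassP v) => [s ->]; rewrite !tsclE; apply: tmk_eq => W phi Hp.
by rewrite !sum_tscale // scale1r.
Qed.
Lemma tsclDr : right_distributive tscl +%R.
Proof.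
move=> k a b; case: (tclassP a) (tclassP b) => [s ->] [t ->].
rewrite -[tmk s + tmk t]/(tadd (tmk s) (tmk t)) taddE !tsclE -[tmk _ + tmk _]/(tadd _ _) taddE; apply: tmk_eq => W phi Hp.
by rewrite sum_tscale // !big_cat !sum_tscale // scalerDr.
Qed.
Lemma tsclDl v : {morph tscl^~ v: a b / a + b}.
Proof.
move=> a b; case: (tclassP v) => [s ->].
rewrite !tsclE taddE'; apply: tmk_eq => W phi Hp.
by rewrite big_cat !sum_tscale // scalerDl.
Qed.

HB.instance Definition _ := GRing.Zmodule_isLmodule.Build K tclass tsclA tscl1 tsclDr tsclDl.

End Tensor.

Definition tensor (K : fieldType) (U V : lmodType K) : lmodType K := tclass U V.

Section More.
Variable K : fieldType.

Lemma sum_flat2 (I J T : Type) (W : nmodType) (s : seq I) (F : I -> seq J)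
  (g : I -> J -> T) (G : T -> W) :
  \sum_(p <- flatten [seq [seq g i j | j <- F i] | i <- s]) G p
  = \sum_(i <- s) \sum_(j <- F i) G (g i j).
Proof. by rewrite big_flatten big_map; apply: eq_bigr => i _; rewrite big_map. Qed.

Lemma teq_lin (T U V W : lmodType K) (F : T -> seq (U * V))
  (HF : forall k x y, teq2 K (F (k *: x + y)) (tscale K k (F x) ++ F y))
  (phi : U -> V -> W) : bilinear_map K phi ->
  linm (fun x => \sum_(q <- F x) phi q.1 q.2).
Proof. by move=> Hp k x y /=; rewrite (HF k x y W phi Hp) big_cat sum_tscale. Qed.

Lemma mkbil (U V W : lmodType K) (phi : U -> V -> W) :
  (forall v, linm (phi^~ v)) -> (forall u, linm (phi u)) -> bilinear_map K phi.
Proof. by move=> H1 H2; split=> k *; [exact: H1 | exact: H2]. Qed.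

Lemma mktril (U V T W : lmodType K) (phi : U -> V -> T -> W) :
  (forall v t, linm (fun u => phi u v t)) -> (forall u t, linm (fun v => phi u v t)) ->
  (forall u v, linm (phi u v)) -> trilinear_map K phi.
Proof.
move=> H1 H2 H3; split; [move=> k u u' v t; exact: H1 |split; [move=> k u v v' t; exact: H2 | move=> k u v t t'; exact: H3]].
Qed.

Lemma tri_1 (U V T W : lmodType K) (phi : U -> V -> T -> W) : trilinear_map K phi ->
  forall v t, linm (fun u => phi u v t).
Proof. by case=> H _ v t k x y; rewrite H. Qed.
Lemma tri_2 (U V T W : lmodType K) (phi : U -> V -> T -> W) : trilinear_map K phi ->
  forall u t, linm (fun v => phi u v t).
Proof. by case=> _ [H _] u t k x y; rewrite H. Qed.
Lemma tri_3 (U V T W : lmodType K) (phi : U -> V -> T -> W) : trilinear_map K phi ->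
  forall u v, linm (phi u v).
Proof. by case=> _ [_ H] u v k x y; rewrite H. Qed.

Lemma linm_comp (U V W : lmodType K) (f : U -> V) (g : V -> W) :
  linm f -> linm g -> linm (fun x => g (f x)).
Proof. by move=> Hf Hg k x y; rewrite Hf Hg. Qed.

Section BilLemmas.
Variables (U V W : lmodType K) (phi : U -> V -> W) (Hp : bilinear_map K phi).
Lemma bilZl k u v : phi (k *: u) v = k *: phi u v.
Proof. exact: (linmZ (bil_l Hp v)). Qed.
Lemma bilZr k u v : phi u (k *: v) = k *: phi u v.
Proof. exact: (linmZ (bil_r Hp u)). Qed.
Lemma bilDl u u' v : phi (u + u') v = phi u v + phi u' v.
Proof. exact: (linmD (bil_l Hp v)). Qed.
Lemma bilDr u v v' : phi u (v + v') = phi u v + phi u v'.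
Proof. exact: (linmD (bil_r Hp u)). Qed.
Lemma bil0l v : phi 0 v = 0.
Proof. exact: (linm0 (bil_l Hp v)). Qed.
Lemma bil0r u : phi u 0 = 0.
Proof. exact: (linm0 (bil_r Hp u)). Qed.
Lemma bilsuml I (r : seq I) F v : phi (\sum_(i <- r) F i) v = \sum_(i <- r) phi (F i) v.
Proof. exact: (linm_sum _ _ (bil_l Hp v)). Qed.
Lemma bilsumr I (r : seq I) F u : phi u (\sum_(i <- r) F i) = \sum_(i <- r) phi u (F i).
Proof. exact: (linm_sum _ _ (bil_r Hp u)). Qed.
End BilLemmas.

Variables (U V : lmodType K).
Local Notation T := (tclass U V).

Lemma tmk_cat (s t : seq (U * V)) : (tmk (s ++ t) : T) = tmk s + tmk t.
Proof. by rewrite -[tmk s + tmk t]/(tadd (tmk s) (tmk t)) taddE. Qed.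
Lemma tmk_scale k (s : seq (U * V)) : (tmk (tscale K k s) : T) = k *: tmk s.
Proof. by rewrite -[k *: tmk s]/(tscl k (tmk s)) tsclE. Qed.
Lemma tmk_nil : (tmk [::] : T) = 0.
Proof. by []. Qed.
Lemma tmk_sum (s : seq (U * V)) : (tmk s : T) = \sum_(p <- s) tmk [:: p].
Proof.
elim: s => [|p s IH]; first by rewrite big_nil.
by rewrite big_cons -IH -tmk_cat.
Qed.
Lemma tmk_linl (h : V) : linm (fun v : U => (tmk [:: (v, h)] : T)).
Proof.
move=> k x y /=; rewrite -tmk_scale -tmk_cat; apply: tmk_eq => W phi Hp.
by rewrite /= !big_cons !big_nil !addr0 /= (bilDl Hp) (bilZl Hp).
Qed.
Lemma tmk_linr (v : U) : linm (fun h : V => (tmk [:: (v, h)] : T)).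
Proof.
move=> k x y /=; rewrite -tmk_scale -tmk_cat; apply: tmk_eq => W phi Hp.
by rewrite /= !big_cons !big_nil !addr0 /= (bilDr Hp) (bilZr Hp) (bilZl Hp).
Qed.

Definition tlift (W : lmodType K) (phi : U -> V -> W) (c : T) : W :=
  \sum_(p <- trepr c) phi p.1 p.2.
Lemma tlift_mk (W : lmodType K) (phi : U -> V -> W) s : bilinear_map K phi ->
  tlift phi (tmk s) = \sum_(p <- s) phi p.1 p.2.
Proof. by move=> Hp; rewrite /tlift (trepr_mk s). Qed.
Lemma tlift_lin (W : lmodType K) (phi : U -> V -> W) : bilinear_map K phi ->
  linm (tlift phi : T -> W).
Proof.
move=> Hp k a b; case: (tclassP a) (tclassP b) => [s ->] [t ->].
by rewrite -tmk_scale -tmk_cat !tlift_mk // big_cat sum_tscale.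
Qed.
End More.

Section TComod.
Variables (K : fieldType) (C : mcoalgebra K) (X : ob C) (V : lmodType K).

Definition Ncm (Z : ob C) : lmodType K := tclass V (mhom C Z X).

Definition Nrho (Z Y : ob C) (c : Ncm Z) : seq (Ncm Y * mhom C Z Y) :=
  flatten [seq [seq ((tmk [:: (p.1, q.1)] : Ncm Y), q.2) | q <- delta C Z Y X p.2]
          | p <- trepr c].

Definition NB (Z Y : ob C) (W : lmodType K) (phi : Ncm Y -> mhom C Z Y -> W)
  (v : V) (h : mhom C Z X) : W :=
  \sum_(q <- delta C Z Y X h) phi (tmk [:: (v, q.1)]) q.2.

Lemma delta_sum_lin (Z Y Z' : ob C) (W : lmodType K) (phi : mhom C Y Z' -> mhom C Z Y -> W) :
  bilinear_map K phi -> linm (fun f => \sum_(q <- delta C Z Y Z' f) phi q.1 q.2).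
Proof. by move=> Hp; apply: teq_lin => // k x y; apply: delta_lin. Qed.

Lemma NB_bil (Z Y : ob C) (W : lmodType K) (phi : Ncm Y -> mhom C Z Y -> W) :
  bilinear_map K phi -> bilinear_map K (NB phi).
Proof.
move=> Hp; apply: mkbil => [h|v].
  move=> k x y; rewrite /NB scaler_sumr -big_split /=; apply: eq_bigr => q _.
  by rewrite (tmk_linl q.1) (bilDl Hp) (bilZl Hp).
apply: (delta_sum_lin (phi := fun a b => phi (tmk [:: (v, a)]) b)).
apply: mkbil => [g|u]; last exact: bil_r.
exact: (linm_comp (tmk_linl _ _) _) || exact: (linm_comp (tmk_linr v) (bil_l Hp g)).
Qed.

Lemma Nrho_sum (Z Y : ob C) (W : lmodType K) (phi : Ncm Y -> mhom C Z Y -> W) (c : Ncm Z) :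
  \sum_(p <- Nrho Y c) phi p.1 p.2 = tlift (NB phi) c.
Proof. by rewrite /Nrho sum_flat2. Qed.

Lemma Nrho_lin (Z Y : ob C) (k : K) (c d : Ncm Z) :
  teq2 K (Nrho Y (k *: c + d)) (tscale K k (Nrho Y c) ++ Nrho Y d).
Proof.
move=> W phi Hp; rewrite big_cat sum_tscale // !Nrho_sum.
exact: (tlift_lin (NB_bil Hp)).
Qed.

Lemma Nrho_coassoc (Z0 Z1 Z2 : ob C) (c : Ncm Z0) :
  teq3 K (flatten [seq [seq (q.1, q.2, p.2) | q <- Nrho Z2 p.1] | p <- Nrho Z1 c])
         (flatten [seq [seq (p.1, q.1, q.2) | q <- delta C Z0 Z1 Z2 p.2] | p <- Nrho Z2 c]).
Proof.
move=> W phi Hp; rewrite [LHS]sum_flat2 [RHS]sum_flat2 /=.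
pose G (n : Ncm Z1) (g : mhom C Z0 Z1) := \sum_(q <- Nrho Z2 n) phi q.1 q.2 g.
pose H (n : Ncm Z2) (d : mhom C Z0 Z2) := \sum_(q <- delta C Z0 Z1 Z2 d) phi n q.1 q.2.
have HG : bilinear_map K G.
  apply: mkbil => [g|n].
    have E : forall n, G n g = tlift (NB (fun a b => phi a b g)) n.
      by move=> n; exact: (Nrho_sum (fun a b => phi a b g) n).
    move=> k x y /=; rewrite !E; apply: tlift_lin; apply: NB_bil.
    by apply: mkbil => [b|a]; [apply: (tri_1 Hp) | apply: (tri_2 Hp)].
  move=> k x y; rewrite /G scaler_sumr -big_split /=; apply: eq_bigr => q _.
  by rewrite (tri_3 Hp).
have HH : bilinear_map K H.
  apply: mkbil => [d|n].
    move=> k x y; rewrite /H scaler_sumr -big_split /=; apply: eq_bigr => q _.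
    by rewrite (tri_1 Hp).
  apply: (delta_sum_lin (phi := phi n)).
  by apply: mkbil => [b|a]; [apply: (tri_2 Hp) | apply: (tri_3 Hp)].
transitivity (\sum_(p <- Nrho Z1 c) G p.1 p.2); first reflexivity.
transitivity (\sum_(p <- Nrho Z2 c) H p.1 p.2); last reflexivity.
rewrite !Nrho_sum; case: (tclassP c) => s ->; rewrite !tlift_mk; try by apply: NB_bil.
have E : forall n g, G n g = tlift (NB (fun a b => phi a b g)) n.
  by move=> n g; exact: (Nrho_sum (fun a b => phi a b g) n).
have Hpg : forall g, bilinear_map K (fun a b => phi a b g).
  by move=> g; apply: mkbil => [b|a]; [apply: (tri_1 Hp) | apply: (tri_2 Hp)].
apply: eq_bigr => x _; rewrite /NB.
under eq_bigr => q _ do rewrite E (tlift_mk _ (NB_bil (Hpg q.2))) big_cons big_nil addr0.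
rewrite /H /NB /=.
have Ht : trilinear_map K (fun a b c => phi (tmk [:: (x.1, a)]) b c).
  apply: mktril => [b d|a d|a b].
  - exact: (linm_comp (tmk_linr x.1) (tri_1 Hp b d)).
  - exact: (tri_2 Hp).
  - exact: (tri_3 Hp).
have := @coassoc K C Z0 Z1 Z2 X x.2 W _ Ht.
rewrite [LHS]sum_flat2 [RHS]sum_flat2 /= => ->.
by [].
Qed.
End TComod.

Section TComod2.
Variables (K : fieldType) (C : mcoalgebra K) (X : ob C) (V : lmodType K).

Lemma eps_bil (Z : ob C) (U : lmodType K) :
  bilinear_map K (fun (n : U) (g : mhom C Z Z) => eps C Z g *: n).
Proof.
apply: mkbil => [g|n] k x y; first by rewrite scalerDr scalerA mulrC -scalerA.
by rewrite eps_lin scalerDl scalerA.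
Qed.

Lemma Nrho_counit (Z : ob C) (c : Ncm X V Z) :
  \sum_(p <- Nrho Z c) eps C Z p.2 *: p.1 = c.
Proof.
rewrite (Nrho_sum (fun (n : Ncm X V Z) g => eps C Z g *: n)).
case: (tclassP c) => s ->; rewrite tlift_mk; last by apply: NB_bil; apply: eps_bil.
rewrite [RHS]tmk_sum; apply: eq_bigr => x _; rewrite /NB.
transitivity (tmk [:: (x.1, \sum_(q <- delta C Z Z X x.2) eps C Z q.2 *: q.1)] : Ncm X V Z).
  rewrite (linm_sum _ _ (tmk_linr x.1)).
  by apply: eq_bigr => q _; rewrite (linmZ (tmk_linr x.1)).
by rewrite (@counitR K C Z X x.2) -surjective_pairing.
Qed.

Definition Ncomod : comodule C :=
  @Comodule K C (Ncm X V) (@Nrho K C X V) (@Nrho_lin K C X V)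
    (@Nrho_coassoc K C X V) Nrho_counit.

End TComod2.

Section Main.
Variables (K : fieldType) (C : mcoalgebra K) (A : algType K) (E : entwining C A).

Lemma main_lemma (tau : nat_family C A) : is_nat E tau ->
  forall (M : comodule C) (X : ob C) (m : cm M X) (a : A),
  tau M X m a = \sum_(p <- rho M X X m) eps C X (tau (Hcomod X) X p.2 a) *: p.1.
Proof.
move=> [Hbil [_ Hnat]] M X m a.
pose N := Ncomod X (cm M X).
pose rhoM : forall Z, cm M Z -> cm N Z := fun Z m => (tmk (rho M Z X m) : Ncm X (cm M X) Z).
have HrM : comodule_morphism rhoM.
  split.
    move=> Z k x y; rewrite /rhoM -tmk_scale -tmk_cat; apply: tmk_eq.
    exact: rho_lin.
  move=> Z Y x W phi Hp.
  rewrite /rhoM /= (Nrho_sum phi) tlift_mk; last exact: NB_bil.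
  rewrite big_map /NB.
  transitivity (\sum_(p <- rho M Z Y x) \sum_(q <- rho M Y X p.1) phi (tmk [:: (q.1, q.2)]) p.2); last first.
    apply: eq_bigr => p _; rewrite [in RHS]tmk_sum (bilsuml Hp).
    by apply: eq_bigr => -[u v] _.
  have Ht : trilinear_map K (fun u b (c : mhom C Z Y) => phi (tmk [:: (u, b)] : Ncm X (cm M X) Y) c).
    apply: mktril => [b d|u d|u b].
    - exact: (linm_comp (tmk_linl b) (bil_l Hp d)).
    - exact: (linm_comp (tmk_linr u) (bil_l Hp d)).
    - exact: (bil_r Hp).
  have := @rho_coassoc K C M Z Y X x W _ Ht.
  by rewrite [LHS]sum_flat2 [RHS]sum_flat2 /= => ->.
have Hj : forall v : cm M X, comodule_morphism
    (fun Z (h : cm (Hcomod X) Z) => (tmk [:: (v, h)] : cm N Z)).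
  move=> v; split.
    by move=> Z k x y; apply: (tmk_linr v).
  move=> Z Y h W phi Hp.
  rewrite /= (Nrho_sum phi) tlift_mk; last exact: NB_bil.
  by rewrite big_cons big_nil addr0 /NB big_map.
pose eps' := tlift (fun (v : cm M X) (h : mhom C X X) => eps C X h *: v).
have F1 : forall m', eps' (tmk (rho M X X m')) = m'.
  move=> m'; rewrite /eps' tlift_mk; last exact: eps_bil.
  exact: rho_counit.
rewrite -{1}[tau M X m a]F1.
have := Hnat M N rhoM HrM X m a; rewrite /rhoM => <-.
rewrite tmk_sum (linm_sum _ _ (bil_l (Hbil N X) a)).
rewrite /eps' (linm_sum _ _ (tlift_lin (eps_bil _ _))).
apply: eq_bigr => -[u h] _ /=.
have := Hnat (Hcomod X) N _ (Hj u) X h a => /= ->.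
rewrite tlift_mk; last exact: eps_bil.
by rewrite unlock /= addr0.
Qed.
End Main.

Section Final.
Variables (K : fieldType).

Lemma linm_scal (U W : lmodType K) (f : U -> W) (c : K) : linm f -> linm (fun x => c *: f x).
Proof. by move=> H k x y; rewrite H scalerDr !scalerA mulrC. Qed.

Lemma linm_sumf (U W : lmodType K) I (r : seq I) (F : I -> U -> W) :
  (forall i, linm (F i)) -> linm (fun x => \sum_(i <- r) F i x).
Proof.
move=> H k x y; rewrite scaler_sumr -big_split; apply: eq_bigr => i _.
exact: H.
Qed.

Lemma linK_scal (U W : lmodType K) (f : U -> K) (w : W) : linK f -> linm (fun x => f x *: w).
Proof. by move=> H k x y; rewrite H scalerDl scalerA. Qed.

Variables (C : mcoalgebra K) (A : algType K) (E : entwining C A).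

Lemma part1 (sigma : sigma_family C A) : in_V1 E sigma -> is_nat E (alpha sigma).
Proof.
move=> [Hsb HV].
have sl : forall X b, linK (sigma X ^~ b).
  by move=> X b k x y; rewrite (Hsb X).1.
have sr : forall X g, linK (sigma X g).
  by move=> X g k x y; rewrite (Hsb X).2.
have sbil : forall (X : ob C) (U : lmodType K) (a : A),
    bilinear_map K (fun (u : U) (g : mhom C X X) => sigma X g a *: u).
  move=> X U a; apply: mkbil => [g|u]; first exact: linm_scal.
  exact: linK_scal.
split; [|split].
- move=> M X; apply: mkbil => [a|m].
    move=> k x y; rewrite /alpha (@rho_lin K C M X X k x y _ _ (sbil X _ a)).
    by rewrite big_cat (sum_tscale _ _ (sbil X _ a)).
  move=> k x y; rewrite /alpha scaler_sumr -big_split; apply: eq_bigr => p _ /=.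
  by rewrite (sr X p.2) scalerDl scalerA.
- move=> M X Y m a W phi Hp.
  rewrite [RHS]sum_flat2 /=.
  have HR : linm (fun x => \sum_(q <- rho M X Y x) phi q.1 q.2).
    by apply: teq_lin => // k x y; apply: rho_lin.
  transitivity (\sum_(p <- rho M X X m) \sum_(q <- rho M X Y p.1)
                  sigma X p.2 a *: phi q.1 q.2).
    rewrite /alpha; have := linm_sum (rho M X X m) (fun p => sigma X p.2 a *: p.1) HR.
    move=> /= ->; apply: eq_bigr => p _.
    by have := linmZ HR (sigma X p.2 a) p.1; move=> /= ->; rewrite scaler_sumr.
  have T1 : trilinear_map K (fun u (f : mhom C X Y) (g : mhom C X X) => sigma X g a *: phi u f).
    apply: mktril => [f g|u g|u f].
    - exact: (linm_scal _ (bil_l Hp f)).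
    - exact: (linm_scal _ (bil_r Hp u)).
    - exact: linK_scal.
  have := @rho_coassoc K C M X X Y m W _ T1.
  rewrite [LHS]sum_flat2 [RHS]sum_flat2 /= => ->.
  transitivity (\sum_(p <- rho M X Y m) phi p.1
      (\sum_(q <- delta C X Y Y p.2) \sum_(r <- psi E X Y q.2 a) sigma Y q.1 r.1 *: r.2)).
    apply: eq_bigr => p _; rewrite HV (bilsumr Hp); apply: eq_bigr => q _.
    by rewrite (bilZr Hp).
  transitivity (\sum_(p <- rho M X Y m) \sum_(q <- delta C X Y Y p.2)
      \sum_(r <- psi E X Y q.2 a) sigma Y q.1 r.1 *: phi p.1 r.2).
    apply: eq_bigr => p _; rewrite (bilsumr Hp); apply: eq_bigr => q _.
    rewrite (bilsumr Hp); apply: eq_bigr => r _.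
    by rewrite (bilZr Hp).
  have T2 : trilinear_map K (fun u (g : mhom C Y Y) (f : mhom C X Y) =>
      \sum_(r <- psi E X Y f a) sigma Y g r.1 *: phi u r.2).
    apply: mktril => [g f|u f|u g].
    - apply: linm_sumf => r; exact: (linm_scal _ (bil_l Hp r.2)).
    - apply: linm_sumf => r; exact: linK_scal.
    - apply: (@teq_lin K _ _ _ _ (fun f => psi E X Y f a) _ (fun b h => sigma Y g b *: phi u h)).
        by move=> k x y; apply: psi_linl.
      apply: mkbil => [h|b]; first exact: linK_scal.
      exact: (linm_scal _ (bil_r Hp u)).
  have := @rho_coassoc K C M X Y Y m W _ T2.
  rewrite [LHS]sum_flat2 [RHS]sum_flat2 /= => <-.
  apply: eq_bigr => p _; rewrite exchange_big /=; apply: eq_bigr => r _.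
  rewrite /alpha (bilsuml Hp); apply: eq_bigr => q _.
  by rewrite (bilZl Hp).
- move=> M N g [Hg1 Hg2] X m a.
  rewrite /alpha (Hg2 X X m _ _ (sbil X _ a)) big_map.
  rewrite (linm_sum _ _ (Hg1 X)); apply: eq_bigr => p _.
  by rewrite (linmZ (Hg1 X)).
Qed.

End Final.
Unset Implicit Arguments.
Set Strict Implicit.

Theorem proposition4p4 (K : fieldType) (C : mcoalgebra K) (A : algType K)
    (E : entwining C A) :
  (forall sigma : sigma_family C A, in_V1 E sigma -> is_nat E (alpha sigma)) /\
  (forall (k : K) (sigma sigma' : sigma_family C A)
          (M : comodule C) (X : ob C) (m : cm M X) (a : A),
     alpha (fun Y f b => k * sigma Y f b + sigma' Y f b) M X m a
     = k *: alpha sigma M X m a + alpha sigma' M X m a) /\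
  (forall tau : nat_family C A, is_nat E tau -> in_V1 E (beta tau)) /\
  (forall sigma : sigma_family C A, in_V1 E sigma ->
     forall (X : ob C) (f : mhom C X X) (a : A), beta (alpha sigma) X f a = sigma X f a) /\
  (forall tau : nat_family C A, is_nat E tau ->
     forall (M : comodule C) (X : ob C) (m : cm M X) (a : A),
       alpha (beta tau) M X m a = tau M X m a).
Proof.
split; first exact: part1.
split.
  move=> k s s' M X m a; rewrite /alpha scaler_sumr -big_split; apply: eq_bigr => p _ /=.
  by rewrite scalerDl scalerA.
split.
  move=> tau Ht; have [Hbil [Hcom _]] := Ht; split.
    move=> X; split=> k u u' v; rewrite /beta.
      by rewrite (Hbil (Hcomod X) X).1 eps_lin.
    by rewrite (Hbil (Hcomod X) X).2 eps_lin.
  move=> X Y f a.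
  have Hb : bilinear_map K (fun (u : mhom C Y Y) (h : mhom C X Y) => eps C Y u *: h).
    have HeY : linK (eps C Y) by move=> k x y; rewrite eps_lin.
    apply: mkbil => [h|u]; first exact: linK_scal.
    by move=> k x y; rewrite scalerDr !scalerA mulrC.
  have := Hcom (Hcomod Y) X Y f a _ _ Hb.
  rewrite /= (@counitL K C X Y) sum_flat2 /= => Hf.
  rewrite /beta -Hf (main_lemma Ht).
  by [].
split.
  move=> sigma [Hsb _] X f a; rewrite /beta /alpha /=.
  have HeK : linK (eps C X) by move=> k x y; rewrite eps_lin.
  have HsK : linK (sigma X ^~ a) by move=> k x y; rewrite (Hsb X).1.
  rewrite (linK_sum _ _ HeK).
  rewrite -[in RHS](@counitL K C X X f) (linK_sum _ _ HsK).
  apply: eq_bigr => p _ /=.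
  by rewrite (linKZ HeK) (linKZ HsK) mulrC.
move=> tau Ht M X m a; rewrite (main_lemma Ht).
by [].
Qed.
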